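(* The transfinite sequence $\langle (T_\alpha,P_\alpha)\rangle_{\alpha\in\mathrm{On}}$ defined by $(T_0,P_0)=((\emptyset,\emptyset),(\emptyset,\emptyset))$, $(T_{\beta+1},P_{\beta+1})=\Gamma_{\mathscr{TP}}(T_\beta,P_\beta)$ and $(T_\lambda,P_\lambda)=\bigcup_{\beta<\lambda}(T_\beta,P_\beta)$ for limit $\lambda$ reaches a fixed point, i.e. a pair $(T_\infty,P_\infty)$ in the sequence with $\Gamma_{\mathscr{TP}}(T_\infty,P_\infty)=(T_\infty,P_\infty)$; moreover $(T_\infty,P_\infty)$ is the least fixed point of $\Gamma_{\mathscr{TP}}$ with respect to the componentwise inclusion order.
   Context: Language. Let $\mathcal L_{\mathbb N}$ be the language of first-order Peano arithmetic and $\mathcal L=\mathcal L_{\mathbb N}\cup\{\mathrm T,\mathrm P\}$ with unary predicates $\mathrm T,\mathrm P$. $\mathcal L$-formulas are in Tait style: literals are $s=t$, $s\neq t$, $\mathrm Tt$, $\neg\mathrm Tt$, $\mathrm Pt$, $\neg\mathrm Pt$; formulas are built from literals by $\wedge,\vee,\forall,\exists$; negation of an arbitrary formula is defined by De Morgan dualities with $\neg\neg\varphi:=\varphi$. A standard Gödel numbering is fixed; $\#e$ is the code of $e$, $\ulcorner e\urcorner$ the numeral of $\#e$, $\mathrm{val}(t)$ the value of a closed term $t$, $\dot\neg$ the primitive recursive function with $\dot\neg(\#\varphi)=\#\neg\varphi$; $\mathrm T\varphi,\mathrm P\varphi$ abbreviate $\mathrm T\ulcorner\varphi\urcorner,\mathrm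 P\ulcorner\varphi\urcorner$. Semantics. A partial model is $(\mathbb N,T,P)$ with $\mathbb N$ the standard model and $T=(T^+,T^-)$, $P=(P^+,P^-)$ pairs of subsets of $\omega$. Strong Kleene satisfaction $\models_{SK}$: arithmetic literals evaluated in $\mathbb N$; $\mathrm Tt$ satisfied iff $\mathrm{val}(t)\in T^+$, $\neg\mathrm Tt$ iff $\mathrm{val}(t)\in T^-$, likewise for $\mathrm P$ with $P^\pm$; conjunction iff both, disjunction iff at least one, $\forall x\varphi(x)$ iff all numeral instances, $\exists x\varphi(x)$ iff some numeral instance. Base paradoxicality. $\mathrm{PA}[\mathrm{SK}]$ is the two-sided sequent calculus for Strong Kleene logic with identity in $\mathcal L$ (initial sequents $\varphi\Rightarrow\varphi$, cut, weakening, the rule from $\Gamma\Rightarrow\Delta,\varphi$ infer $\neg\varphi,\Gamma\Rightarrow\Delta$, usual rules for $\wedge,\vee,\forall,\exists$, reflexivity $\Rightarrow t=t$, replacement from $\Gamma\Rightarrow\Delta,\varphi(t)$ infer $\Gamma\Rightarrow\Delta,s\neq t,\varphi(s)$) plus the initial sequents of Peano arithmetic and the induction rule for all $\mathcal L$-formulas. A sentence $\varphi$ is base paradoxical iff $\mathrm{PA}[\mathrm{SK}]$ derives $\varphi\Leftrightarrow\neg\mathrm T\varphi$ and $\neg\varphi\Leftrightarrow\mathrm T\varphi$ (where $\Leftrightarrow$ denotes derivability of both sequents). $B(x)$ is an $\mathcal L_{\mathbb N}$-formula defining in $\mathbb N$ the set of codes of base paradoxical sentences, and $\Pi(x):=B(x)\vee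 B(\dot\neg x)$. Jump. Let $\mathscr P(x)$ be the $\mathcal L$-formula which is the disjunction of: (1) $x$ codes a sentence and $\Pi(x)$; (2) $x$ codes a sentence $\mathrm Tt$ ($t$ a closed term) and $\mathrm P(\mathrm{val}(t))$; (3) $x$ codes a sentence $\neg\mathrm Tt$ and $\mathrm P(\mathrm{val}(t))$; (4) $x$ codes a sentence $\psi\wedge\theta$ and $(\mathrm P\psi\wedge\mathrm P\theta)\vee(\mathrm T\psi\wedge\mathrm P\theta)\vee(\mathrm T\theta\wedge\mathrm P\psi)$; (5) $x$ codes a sentence $\psi\vee\theta$ and $(\mathrm P\psi\wedge\mathrm P\theta)\vee(\neg\mathrm T\psi\wedge\mathrm P\theta)\vee(\neg\mathrm T\theta\wedge\mathrm P\psi)$; (6) $x$ codes a sentence $\forall v\psi$ and $\exists y\,\mathrm P\psi(\dot y)\wedge\forall y(\mathrm P\psi(\dot y)\vee\mathrm T\psi(\dot y))$; (7) $x$ codes a sentence $\exists v\psi$ and $\exists y\,\mathrm P\psi(\dot y)\wedge\forall y(\mathrm P\psi(\dot y)\vee\neg\mathrm T\psi(\dot y))$; here $\psi(\dot y)$ is the code of the result of substituting the numeral of $y$ for $v$. Write $\mathscr P(\varphi)$ for $\mathscr P(\ulcorner\varphi\urcorner)$. Define $\Gamma_{\mathscr{TP}}(T,P)=\big((\{\#\varphi:(\mathbb N,T,P)\models_{SK}\varphi\},\{\#\varphi:(\mathbb N,T,P)\models_{SK}\neg\varphi\}),(\{\#\varphi:(\mathbb N,T,P)\models_{SK}\mathscr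 P(\varphi)\},\{\#\varphi:(\mathbb N,T,P)\models_{SK}\varphi\vee\neg\varphi\})\big)$, $\varphi$ ranging over $\mathcal L$-sentences. Order: $(X,Y)\le(X',Y')$ iff $X\subseteq X'$ and $Y\subseteq Y'$; $(T,P)\le(T',P')$ iff $T\le T'$ and $P\le P'$; unions are componentwise. *)

(* Defs.v *)
From mathcomp Require Import all_boot.
From Stdlib Require List.
Set Implicit Arguments. Unset Strict Implicit. Unset Printing Implicit Defensive.

Inductive term : Type :=
| tVar (n : nat) | tZero | tSucc (t : term) | tAdd (s t : term) | tMul (s t : term).

Inductive form : Type :=
| fEq (s t : term) | fNeq (s t : term)
| fT (t : term) | fNT (t : term)
| fP (t : term) | fNP (t : term)
| fAnd (a b : form) | fOr (a b : form)
| fAll (v : nat) (a : form) | fEx (v : nat) (a : form).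

Fixpoint fneg (a : form) : form :=
  match a with
  | fEq s t => fNeq s t | fNeq s t => fEq s t
  | fT t => fNT t | fNT t => fT t
  | fP t => fNP t | fNP t => fP t
  | fAnd a b => fOr (fneg a) (fneg b) | fOr a b => fAnd (fneg a) (fneg b)
  | fAll v a => fEx v (fneg a) | fEx v a => fAll v (fneg a)
  end.

Fixpoint tvars (t : term) : seq nat :=
  match t with
  | tVar n => [:: n] | tZero => [::] | tSucc t => tvars t
  | tAdd s t | tMul s t => tvars s ++ tvars t
  end.

(* value of a (closed) term in the standard model *)
Fixpoint tval (t : term) : nat :=
  match t with
  | tVar _ => 0 | tZero => 0 | tSucc t => (tval t).+1
  | tAdd s t => tval s + tval t | tMul s t => tval s * tval t
  end.

Fixpoint numeral (n : nat) : term :=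
  match n with 0 => tZero | n'.+1 => tSucc (numeral n') end.

Fixpoint tsubst (x : nat) (u t : term) : term :=
  match t with
  | tVar n => if n == x then u else tVar n
  | tZero => tZero | tSucc t => tSucc (tsubst x u t)
  | tAdd s t => tAdd (tsubst x u s) (tsubst x u t)
  | tMul s t => tMul (tsubst x u s) (tsubst x u t)
  end.

Fixpoint subst (x : nat) (u : term) (a : form) : form :=
  match a with
  | fEq s t => fEq (tsubst x u s) (tsubst x u t)
  | fNeq s t => fNeq (tsubst x u s) (tsubst x u t)
  | fT t => fT (tsubst x u t) | fNT t => fNT (tsubst x u t)
  | fP t => fP (tsubst x u t) | fNP t => fNP (tsubst x u t)
  | fAnd a b => fAnd (subst x u a) (subst x u b)
  | fOr a b => fOr (subst x u a) (subst x u b)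
  | fAll v a => if v == x then fAll v a else fAll v (subst x u a)
  | fEx v a => if v == x then fEx v a else fEx v (subst x u a)
  end.

Fixpoint fv (a : form) : seq nat :=
  match a with
  | fEq s t | fNeq s t => tvars s ++ tvars t
  | fT t | fNT t | fP t | fNP t => tvars t
  | fAnd a b | fOr a b => fv a ++ fv b
  | fAll v a | fEx v a => [seq y <- fv a | y != v]
  end.

Definition fvs (G : seq form) : seq nat := flatten (map fv G).

Definition sentence (a : form) : Prop := fv a = [::].

Fixpoint free_for (u : term) (x : nat) (a : form) : bool :=
  match a with
  | fAnd a b | fOr a b => free_for u x a && free_for u x b
  | fAll v b | fEx v b =>
      (x \notin fv a) || ((v \notin tvars u) && free_for u x b)
  | _ => true
  end.

Fixpoint term_tree (t : term) : GenTree.tree nat :=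
  match t with
  | tVar n => GenTree.Node 0 [:: GenTree.Leaf n]
  | tZero => GenTree.Node 1 [::]
  | tSucc t => GenTree.Node 2 [:: term_tree t]
  | tAdd s t => GenTree.Node 3 [:: term_tree s; term_tree t]
  | tMul s t => GenTree.Node 4 [:: term_tree s; term_tree t]
  end.

Fixpoint form_tree (a : form) : GenTree.tree nat :=
  match a with
  | fEq s t => GenTree.Node 5 [:: term_tree s; term_tree t]
  | fNeq s t => GenTree.Node 6 [:: term_tree s; term_tree t]
  | fT t => GenTree.Node 7 [:: term_tree t]
  | fNT t => GenTree.Node 8 [:: term_tree t]
  | fP t => GenTree.Node 9 [:: term_tree t]
  | fNP t => GenTree.Node 10 [:: term_tree t]
  | fAnd a b => GenTree.Node 11 [:: form_tree a; form_tree b]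
  | fOr a b => GenTree.Node 12 [:: form_tree a; form_tree b]
  | fAll v a => GenTree.Node 13 [:: GenTree.Leaf v; form_tree a]
  | fEx v a => GenTree.Node 14 [:: GenTree.Leaf v; form_tree a]
  end.

Definition gcode (a : form) : nat := pickle (form_tree a).
Definition quote (a : form) : term := numeral (gcode a).

Definition subl (G G' : seq form) : Prop := forall a, List.In a G -> List.In a G'.

Inductive derives : seq form -> seq form -> Prop :=
| d_id a : derives [:: a] [:: a]
| d_weak G D G' D' : derives G D -> subl G G' -> subl D D' -> derives G' D'
| d_cut G D a : derives G (a :: D) -> derives (a :: G) D -> derives G D
| d_neg G D a : derives G (a :: D) -> derives (fneg a :: G) D
| d_andL G D a b : derives (a :: b :: G) D -> derives (fAnd a b :: G) D
| d_andR G D a b : derives G (a :: D) -> derives G (b :: D) -> derives G (fAnd a b :: D)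
| d_orL G D a b : derives (a :: G) D -> derives (b :: G) D -> derives (fOr a b :: G) D
| d_orR G D a b : derives G (a :: b :: D) -> derives G (fOr a b :: D)
| d_allL G D x a u : free_for u x a ->
    derives (subst x u a :: G) D -> derives (fAll x a :: G) D
| d_allR G D x a y : y \notin fvs G -> y \notin fvs D -> y \notin fv (fAll x a) ->
    free_for (tVar y) x a ->
    derives G (subst x (tVar y) a :: D) -> derives G (fAll x a :: D)
| d_exL G D x a y : y \notin fvs G -> y \notin fvs D -> y \notin fv (fEx x a) ->
    free_for (tVar y) x a ->
    derives (subst x (tVar y) a :: G) D -> derives (fEx x a :: G) D
| d_exR G D x a u : free_for u x a ->
    derives G (subst x u a :: D) -> derives G (fEx x a :: D)
| d_refl t : derives [::] [:: fEq t t]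
| d_repl G D x a s t : free_for s x a -> free_for t x a ->
    derives G (subst x t a :: D) -> derives G (fNeq s t :: subst x s a :: D)
| d_pa1 s : derives [:: fEq (tSucc s) tZero] [::]
| d_pa2 s t : derives [:: fEq (tSucc s) (tSucc t)] [:: fEq s t]
| d_pa3 s : derives [::] [:: fEq (tAdd s tZero) s]
| d_pa4 s t : derives [::] [:: fEq (tAdd s (tSucc t)) (tSucc (tAdd s t))]
| d_pa5 s : derives [::] [:: fEq (tMul s tZero) tZero]
| d_pa6 s t : derives [::] [:: fEq (tMul s (tSucc t)) (tAdd (tMul s t) s)]
(* induction rule, for all L-formulas *)
| d_ind G D x a y t : y \notin fvs G -> y \notin fvs D -> y \notin fv (fAll x a) ->
    free_for (tVar y) x a -> free_for (tSucc (tVar y)) x a -> free_for t x a ->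
    derives (subst x (tVar y) a :: G) (subst x (tSucc (tVar y)) a :: D) ->
    derives (subst x tZero a :: G) (subst x t a :: D).

Definition derives_iff (a b : form) : Prop := derives [:: a] [:: b] /\ derives [:: b] [:: a].

Definition base_paradoxical (a : form) : Prop :=
  sentence a /\
  derives_iff a (fneg (fT (quote a))) /\ derives_iff (fneg a) (fT (quote a)).

Record TP : Type := mkTP {
  Tplus : nat -> Prop; Tminus : nat -> Prop;
  Pplus : nat -> Prop; Pminus : nat -> Prop }.

Inductive sat (X : TP) : form -> Prop :=
| s_eq s t : tval s = tval t -> sat X (fEq s t)
| s_neq s t : tval s <> tval t -> sat X (fNeq s t)
| s_T t : Tplus X (tval t) -> sat X (fT t)
| s_NT t : Tminus X (tval t) -> sat X (fNT t)
| s_P t : Pplus X (tval t) -> sat X (fP t)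
| s_NP t : Pminus X (tval t) -> sat X (fNP t)
| s_and a b : sat X a -> sat X b -> sat X (fAnd a b)
| s_orl a b : sat X a -> sat X (fOr a b)
| s_orr a b : sat X b -> sat X (fOr a b)
| s_all v a : (forall n, sat X (subst v (numeral n) a)) -> sat X (fAll v a)
| s_ex v a n : sat X (subst v (numeral n) a) -> sat X (fEx v a).

(* (N,X) |=_SK  scrP(<a>), for a sentence a: the Strong Kleene satisfaction
   clauses of the jump formula scrP, unfolded (Pi is arithmetic, hence
   evaluated classically; B defines the base paradoxical codes). *)
Definition jumpP (X : TP) (a : form) : Prop :=
  (base_paradoxical a \/ base_paradoxical (fneg a))
  \/ (exists t, a = fT t /\ Pplus X (tval t))
  \/ (exists t, a = fNT t /\ Pplus X (tval t))
  \/ (exists b c, a = fAnd b c /\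
        ((Pplus X (gcode b) /\ Pplus X (gcode c)) \/
         (Tplus X (gcode b) /\ Pplus X (gcode c)) \/
         (Tplus X (gcode c) /\ Pplus X (gcode b))))
  \/ (exists b c, a = fOr b c /\
        ((Pplus X (gcode b) /\ Pplus X (gcode c)) \/
         (Tminus X (gcode b) /\ Pplus X (gcode c)) \/
         (Tminus X (gcode c) /\ Pplus X (gcode b))))
  \/ (exists v b, a = fAll v b /\
        (exists y, Pplus X (gcode (subst v (numeral y) b))) /\
        (forall y, Pplus X (gcode (subst v (numeral y) b)) \/
                   Tplus X (gcode (subst v (numeral y) b))))
  \/ (exists v b, a = fEx v b /\
        (exists y, Pplus X (gcode (subst v (numeral y) b))) /\
        (forall y, Pplus X (gcode (subst v (numeral y) b)) \/
                   Tminus X (gcode (subst v (numeral y) b)))).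

Definition codes (Q : form -> Prop) (n : nat) : Prop :=
  exists a, sentence a /\ gcode a = n /\ Q a.

Definition GammaTP (X : TP) : TP :=
  mkTP (codes (fun a => sat X a))
       (codes (fun a => sat X (fneg a)))
       (codes (fun a => jumpP X a))
       (codes (fun a => sat X (fOr a (fneg a)))).

Definition tp_le (X Y : TP) : Prop :=
  (forall n, Tplus X n -> Tplus Y n) /\ (forall n, Tminus X n -> Tminus Y n) /\
  (forall n, Pplus X n -> Pplus Y n) /\ (forall n, Pminus X n -> Pminus Y n).
Definition tp_eq (X Y : TP) : Prop := tp_le X Y /\ tp_le Y X.
Definition tp_bot : TP :=
  mkTP (fun _ => False) (fun _ => False) (fun _ => False) (fun _ => False).
Definition tp_union (I : Type) (F : I -> TP) (J : I -> Prop) : TP :=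
  mkTP (fun n => exists i, J i /\ Tplus (F i) n)
       (fun n => exists i, J i /\ Tminus (F i) n)
       (fun n => exists i, J i /\ Pplus (F i) n)
       (fun n => exists i, J i /\ Pminus (F i) n).

Definition well_order (A : Type) (lt : A -> A -> Prop) : Prop :=
  well_founded lt /\
  (forall x y z, lt x y -> lt y z -> lt x z) /\
  (forall x y, lt x y \/ x = y \/ lt y x).

Definition is_succ_of (A : Type) (lt : A -> A -> Prop) (b a : A) : Prop :=
  lt b a /\ forall c, lt b c -> lt c a -> False.

Definition is_limit (A : Type) (lt : A -> A -> Prop) (a : A) : Prop :=
  (exists b, lt b a) /\ forall b, lt b a -> exists c, lt b c /\ lt c a.

Definition TP_sequence (A : Type) (lt : A -> A -> Prop) (s : A -> TP) : Prop :=
  (forall a, (forall b, ~ lt b a) -> tp_eq (s a) tp_bot) /\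
  (forall a b, is_succ_of lt b a -> tp_eq (s a) (GammaTP (s b))) /\
  (forall a, is_limit lt a -> tp_eq (s a) (tp_union s (fun b => lt b a))).

(* Main.v *)
Require Import Defs.
From Stdlib Require Import Classical FunctionalExtensionality PropExtensionality ProofIrrelevance.

Definition tle := tp_le.

Lemma tle_refl X : tle X X.
Proof. unfold tle, tp_le; repeat split; auto. Qed.

Lemma tle_trans X Y Z : tle X Y -> tle Y Z -> tle X Z.
Proof. unfold tle, tp_le; intros (a&b&c&d) (a'&b'&c'&d'); repeat split; auto. Qed.

Lemma tle_anti X Y : tle X Y -> tle Y X -> X = Y.
Proof.
  destruct X as [a b c d], Y as [a' b' c' d']; unfold tle, tp_le; simpl.
  intros (h1&h2&h3&h4) (k1&k2&k3&k4).
  f_equal; apply functional_extensionality; intro n; apply propositional_extensionality; split; auto.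
Qed.

Lemma union_ub I (F : I -> TP) (J : I -> Prop) i : J i -> tle (F i) (tp_union F J).
Proof. intro Hi; unfold tle, tp_le; simpl; repeat split; intros n H; exists i; auto. Qed.

Lemma union_lub I (F : I -> TP) (J : I -> Prop) Z :
  (forall i, J i -> tle (F i) Z) -> tle (tp_union F J) Z.
Proof.
  intro H; unfold tle, tp_le; simpl; repeat split; intros n [i [Hi Hn]];
  destruct (H i Hi) as (h1&h2&h3&h4); auto.
Qed.

Lemma sat_mono X Y a : tle X Y -> sat X a -> sat Y a.
Proof.
  intros (h1&h2&h3&h4) H; induction H.
  all: try (econstructor; eauto; fail).
  all: try (apply s_all; intro n; auto).
Qed.

Lemma jump_mono X Y a : tle X Y -> jumpP X a -> jumpP Y a.
Proof.
  intros (h1&h2&h3&h4) H; unfold jumpP in *.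
  destruct H as [H|[H|[H|[H|[H|[H|H]]]]]].
  - left; exact H.
  - right; left; destruct H as [t [e p]]; eauto.
  - right; right; left; destruct H as [t [e p]]; eauto.
  - do 3 right; left; destruct H as [b [c [e p]]]; exists b, c; split; auto.
    destruct p as [[p q]|[[p q]|[p q]]]; auto.
  - do 4 right; left; destruct H as [b [c [e p]]]; exists b, c; split; auto.
    destruct p as [[p q]|[[p q]|[p q]]]; auto.
  - do 5 right; left; destruct H as [v [b [e [[y p] q]]]]; exists v, b; split; auto.
    split; [exists y; auto|]. intro z; destruct (q z); auto.
  - do 6 right; destruct H as [v [b [e [[y p] q]]]]; exists v, b; split; auto.
    split; [exists y; auto|]. intro z; destruct (q z); auto.
Qed.

Lemma gamma_mono X Y : tle X Y -> tle (GammaTP X) (GammaTP Y).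
Proof.
  intro H; unfold tle, tp_le; simpl; repeat split; intros n [a [s [e p]]];
  exists a; repeat split; auto; eauto using sat_mono, jump_mono.
Qed.

Inductive tower : TP -> Prop :=
| tw_succ X : tower X -> tower (GammaTP X)
| tw_sup (I : Type) (F : I -> TP) (J : I -> Prop) :
    (forall i, J i -> tower (F i)) -> tower (tp_union F J).

Lemma infl X : tower X -> tle X (GammaTP X).
Proof.
  induction 1.
  - apply gamma_mono; auto.
  - apply union_lub; intros i Hi.
    apply tle_trans with (GammaTP (F i)); auto.
    apply gamma_mono, union_ub; auto.
Qed.

Definition extreme c := forall x, tower x -> tle x c -> x <> c -> tle (GammaTP x) c.

Lemma lemA c : tower c -> extreme c -> forall x, tower x -> tle x c \/ tle (GammaTP c) x.
Proof.
  intros Tc Ec x Tx; induction Tx as [x Tx IH | I F J HT IH].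
  - destruct IH as [H|H].
    + destruct (classic (x = c)) as [e|ne].
      * subst; right; apply tle_refl.
      * left; apply Ec; auto.
    + right; apply tle_trans with x; auto; apply infl; auto.
  - destruct (classic (exists i, J i /\ tle (GammaTP c) (F i))) as [[i [Hi H]]|N].
    + right; apply tle_trans with (F i); auto; apply union_ub; auto.
    + left; apply union_lub; intros i Hi.
      destruct (IH i Hi) as [H|H]; auto. exfalso; apply N; eauto.
Qed.

Arguments lemA {c} _ _ {x}.
Lemma lemB c : tower c -> extreme c.
Proof.
  induction 1 as [c Tc IH | I F J HT IH]; intros x Tx Hle Hne.
  - destruct (lemA Tc IH Tx) as [H|H].
    + destruct (classic (x = c)) as [e|ne].
      * subst; apply tle_refl.
      * apply tle_trans with c; [apply IH; auto | apply infl; auto].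
    + exfalso; apply Hne; apply tle_anti; auto.
  - destruct (classic (exists i, J i /\ tle x (F i) /\ x <> F i)) as [[i [Hi [H1 H2]]]|N].
    + apply tle_trans with (F i); [apply (IH i Hi); auto | apply union_ub; auto].
    + exfalso; apply Hne; apply tle_anti; auto.
      apply union_lub; intros i Hi.
      destruct (lemA (HT i Hi) (IH i Hi) Tx) as [H|H].
      * destruct (classic (x = F i)) as [e|ne].
        -- subst; apply tle_refl.
        -- exfalso; apply N; eauto.
      * apply tle_trans with (GammaTP (F i)); auto; apply infl; auto.
Qed.

Arguments lemB {c}.
Lemma chain {x y} : tower x -> tower y -> tle x y \/ tle y x.
Proof.
  intros Tx Ty; destruct (lemA Ty (lemB Ty) Tx) as [H|H]; auto.
  right; apply tle_trans with (GammaTP y); auto; apply infl; auto.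
Qed.

Lemma below_fix Y : tle (GammaTP Y) Y -> forall X, tower X -> tle X Y.
Proof.
  intros HY X TX; induction TX.
  - apply tle_trans with (GammaTP Y); auto; apply gamma_mono; auto.
  - apply union_lub; auto.
Qed.

Definition A := { X : TP | tower X }.
Definition ltA (a b : A) := tle (proj1_sig a) (proj1_sig b) /\ proj1_sig a <> proj1_sig b.

Lemma A_eq (a b : A) : proj1_sig a = proj1_sig b -> a = b.
Proof.
  destruct a as [x p], b as [y q]; simpl; intro e; subst; f_equal; apply proof_irrelevance.
Qed.

Lemma wf_A : well_founded ltA.
Proof.
  assert (P : forall x, tower x -> forall a : A, tle (proj1_sig a) x -> Acc ltA a).
  { induction 1 as [x Tx IH | I F J HT IH]; intros a Ha; constructor; intros b [Hb1 Hb2].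
    - apply IH.
      destruct (lemA Tx (lemB Tx) (proj2_sig b)) as [H|H]; auto.
      exfalso; apply Hb2; apply tle_anti; auto.
      apply tle_trans with (GammaTP x); auto.
    - destruct (classic (exists i, J i /\ ~ tle (F i) (proj1_sig b))) as [[i [Hi H]]|N].
      + apply (IH i Hi).
        destruct (chain (proj2_sig b) (HT i Hi)) as [H'|H']; auto; contradiction.
      + exfalso; apply Hb2; apply tle_anti; auto.
        apply tle_trans with (tp_union F J); auto.
        apply union_lub; intros i Hi; apply NNPP; intro H; apply N; eauto. }
  intro a; apply (P (proj1_sig a) (proj2_sig a)); apply tle_refl.
Qed.

Definition botA : A.
Proof.
  exists (tp_union (fun X : TP => X) (fun _ => False)).
  apply tw_sup; intros i [].
Defined.

Definition topX : TP := tp_union (fun X : TP => X) tower.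

Lemma top_tower : tower topX.
Proof. apply tw_sup; auto. Qed.

Lemma top_fix : tle (GammaTP topX) topX /\ tle topX (GammaTP topX).
Proof.
  split.
  - apply (union_ub _ (fun X : TP => X) tower); apply tw_succ, top_tower.
  - apply infl, top_tower.
Qed.

Lemma tp_eq_of X Y : X = Y -> tp_eq X Y.
Proof. intros ->; split; apply tle_refl. Qed.

Theorem mainTheorem2 :
  exists (A : Type) (lt : A -> A -> Prop) (s : A -> TP) (a : A),
    well_order lt /\ TP_sequence lt s /\
    tp_eq (GammaTP (s a)) (s a) /\
    (forall Y : TP, tp_eq (GammaTP Y) Y -> tp_le (s a) Y).
Proof.
  exists A, ltA, (@proj1_sig _ _), (exist _ topX top_tower).
  split; [|split; [|split]].
  - split; [exact wf_A|split].
    + intros x y z [h1 h2] [k1 k2]; split; [apply tle_trans with (proj1_sig y); auto|].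
      intro e; apply h2; apply tle_anti; auto; rewrite e; auto.
    + intros x y.
      destruct (classic (proj1_sig x = proj1_sig y)) as [e|ne].
      * right; left; apply A_eq; auto.
      * destruct (chain (proj2_sig x) (proj2_sig y)) as [H|H].
        -- left; split; auto.
        -- right; right; split; auto.
  - split; [|split].
    + intros a Ha. apply tp_eq_of.
      apply NNPP; intro ne.
      apply (Ha botA). split.
      * apply union_lub; intros i [].
      * intro e; apply ne. rewrite <- e. simpl. apply tle_anti; [apply union_lub; intros i []|].
        unfold tle, tp_le; simpl; repeat split; intros n [].
    + intros a b [[Hb1 Hb2] Hs]. apply tp_eq_of.
      assert (Tb := proj2_sig b). assert (Ta := proj2_sig a).
      assert (H : tle (GammaTP (proj1_sig b)) (proj1_sig a)).
      { destruct (lemA Tb (lemB Tb) Ta) as [H|H]; auto.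
        exfalso; apply Hb2; apply tle_anti; auto. }
      apply NNPP; intro ne.
      destruct (classic (proj1_sig b = GammaTP (proj1_sig b))) as [e|ne2].
      * apply Hb2; apply tle_anti; auto.
        apply below_fix; auto. rewrite <- e; apply tle_refl.
      * apply (Hs (exist _ _ (tw_succ _ Tb))); split; simpl; auto.
        apply infl; auto.
    + intros a Ha. apply tp_eq_of.
      assert (Tu : tower (tp_union (@proj1_sig _ _) (fun b => ltA b a))).
      { apply tw_sup; intros i _; exact (proj2_sig i). }
      assert (Hle : tle (tp_union (@proj1_sig _ _) (fun b => ltA b a)) (proj1_sig a)).
      { apply union_lub; intros i [Hi _]; auto. }
      apply tle_anti; auto.
      apply NNPP; intro N.
      destruct (proj2 Ha (exist _ _ Tu)) as [c [[Hc1 Hc2] Hc3]].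
      { split; auto. intro e; apply N; simpl in e; rewrite <- e; apply tle_refl. }
      apply Hc2; apply tle_anti; auto.
      apply (union_ub _ (@proj1_sig _ _) (fun b => ltA b a)); auto.
  - simpl; split; [apply (proj1 top_fix) | apply (proj2 top_fix)].
  - intros Y [HY _]; simpl.
    apply union_lub; intros i Ti; apply below_fix; auto.
Qed.
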